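(* Let $n>24$, $0<\epsilon<\frac13$, $\delta>0$, $s>0$, and let $m=\epsilon^{-2}n^{1+\delta}$ (assumed to be an integer). Then $$\mathsf P\left\{ x\in U^m:\ \left|\sum_{i=1}^n \frac{k_i(x)(k_i(x)-1)}{m(m-1)}\cdot\frac{1}{\|p\|^2}-1\right|\le \epsilon\left(3+\frac{6s}{n^{\delta/2}}+\frac{5s^2\epsilon}{n^{\delta}}\right)\right\}\ \ge\ 1-\frac{10}{9}e^{-s^2/4}.$$
   Context: Standing setup: $U$ is a finite set (the key space) with a probability measure $q$; $T=\{1,\dots,n\}$; $h:U\to T$ is an arbitrary function. $p_i=\sum_{u\in h^{-1}(i)}q(u)$ and $\|p\|^2=\sum_{i=1}^n p_i^2$. $U^m$ carries the product measure $q^m$ (keys chosen independently), and $\mathsf P$ denotes probability under $q^m$. For $x=(x_1,\dots,x_m)\in U^m$, $k_i(x)=|\{j: h(x_j)=i\}|$ (number of keys of $x$ hashed to slot $i$, with multiplicity). *)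

(* Defs.v *)
From HB Require Import structures.
From mathcomp Require Import all_boot all_order all_algebra.
From mathcomp Require Import reals sequences exp.
Set Implicit Arguments. Unset Strict Implicit. Unset Printing Implicit Defensive.
Import Order.TTheory GRing.Theory Num.Theory.
Local Open Scope ring_scope.

(* Slot probability p_i = sum_{u in h^{-1}(i)} q(u); slots T = 'I_n (i.e. {0..n-1} ~ {1..n}). *)
Definition pslot (R : realType) (U : finType) (n : nat) (q : U -> R) (h : U -> 'I_n)
  (i : 'I_n) : R := \sum_(u | h u == i) q u.

Definition normp2 (R : realType) (U : finType) (n : nat) (q : U -> R) (h : U -> 'I_n) : R :=
  \sum_(i < n) pslot q h i ^+ 2.

Definition kcount (U : finType) (n m : nat) (h : U -> 'I_n) (x : {ffun 'I_m -> U})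
  (i : 'I_n) : nat := #|[set j : 'I_m | h (x j) == i]|.

Definition probm (R : realType) (U : finType) (m : nat) (q : U -> R)
  (A : pred {ffun 'I_m -> U}) : R :=
  \sum_(x : {ffun 'I_m -> U} | A x) \prod_(j < m) q (x j).

(* Main.v *)
Require Import Defs.
From HB Require Import structures.
From mathcomp Require Import all_boot all_order all_algebra all_fingroup.
From mathcomp Require Import reals sequences exp.
Import Order.TTheory GRing.Theory Num.Theory.
Local Open Scope ring_scope.
Set Implicit Arguments. Unset Strict Implicit. Unset Printing Implicit Defensive.

Definition Ex (R : realType) (U : finType) (m : nat) (q : U -> R)
  (F : {ffun 'I_m -> U} -> R) : R :=
  \sum_(x : {ffun 'I_m -> U}) (\prod_(j < m) q (x j)) * F x.

Definition fcons (U : finType) (m : nat) (u : U) (y : {ffun 'I_m -> U}) :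
  {ffun 'I_m.+1 -> U} := [ffun i => if unlift ord0 i is Some j then y j else u].

Lemma fcons0 (U : finType) m (u : U) (y : {ffun 'I_m -> U}) : fcons u y ord0 = u.
Proof. by rewrite ffunE unlift_none. Qed.

Lemma fconsS (U : finType) m (u : U) (y : {ffun 'I_m -> U}) j :
  fcons u y (lift ord0 j) = y j.
Proof. by rewrite ffunE liftK. Qed.

Lemma Ex_cons (R : realType) (U : finType) (q : U -> R) m F :
  Ex q F = \sum_u q u * Ex q (fun y : {ffun 'I_m -> U} => F (fcons u y)).
Proof.
rewrite /Ex.
rewrite [RHS](eq_bigr (fun u => \sum_(y : {ffun 'I_m -> U}) q u * ((\prod_(j < m) q (y j)) * F (fcons u y)))); last by move=> u _; rewrite big_distrr.
rewrite pair_big /=.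
rewrite (reindex (fun p : U * {ffun 'I_m -> U} => fcons p.1 p.2)) /=; last first.
  exists (fun x : {ffun 'I_m.+1 -> U} => (x ord0, [ffun j => x (lift ord0 j)])).
    by move=> [u y] _ /=; rewrite fcons0; congr pair; apply/ffunP => j; rewrite ffunE fconsS.
  move=> x _; apply/ffunP => i; rewrite ffunE /=.
  by case: unliftP => [j ->|->]; rewrite ?ffunE.
apply: eq_bigr => [[u y]] _ /=.
by rewrite big_ord_recl fcons0 mulrA; congr (_ * _ * _); apply: eq_bigr => j _; rewrite fconsS.
Qed.

Lemma Ex1 (R : realType) (U : finType) (q : U -> R) m :
  \sum_u q u = 1 -> Ex q (fun _ : {ffun 'I_m -> U} => 1) = 1.
Proof.
move=> q1; rewrite /Ex.
under eq_bigr => x _ do rewrite mulr1.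
rewrite -(bigA_distr_bigA (fun (_ : 'I_m) u => q u)) /=.
by rewrite big1 // => i _; rewrite q1.
Qed.

Lemma eq_Ex (R : realType) (U : finType) (q : U -> R) m (F G : {ffun 'I_m -> U} -> R) :
  (forall x, F x = G x) -> Ex q F = Ex q G.
Proof. by move=> FG; rewrite /Ex; apply: eq_bigr => x _; rewrite FG. Qed.

Lemma ExZ (R : realType) (U : finType) (q : U -> R) m c (F : {ffun 'I_m -> U} -> R) :
  Ex q (fun x => c * F x) = c * Ex q F.
Proof. by rewrite /Ex mulr_sumr; apply: eq_bigr => x _; rewrite mulrCA. Qed.

Definition atn (U : finType) m (u0 : U) (x : {ffun 'I_m -> U}) (i : nat) : U :=
  match (insub i : option 'I_m) with Some j => x j | None => u0 end.

Lemma atn_ord (U : finType) m (u0 : U) (x : {ffun 'I_m -> U}) (j : 'I_m) :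
  atn u0 x j = x j.
Proof. by rewrite /atn valK. Qed.

Lemma atn_cons0 (U : finType) m (u0 u : U) (y : {ffun 'I_m -> U}) :
  atn u0 (fcons u y) 0 = u.
Proof. by rewrite (atn_ord u0 (fcons u y) ord0) fcons0. Qed.

Lemma atn_consS (U : finType) m (u0 u : U) (y : {ffun 'I_m -> U}) i :
  atn u0 (fcons u y) i.+1 = atn u0 y i.
Proof.
case: (ltnP i m) => hi.
  have -> : i.+1 = lift ord0 (Ordinal hi) :> nat by [].
  by rewrite atn_ord fconsS -(atn_ord u0 y (Ordinal hi)).
rewrite /atn !insubF //; first by rewrite ltnNge hi.
by rewrite ltnS ltnNge hi.
Qed.

Definition gg (U : finType) n (h : U -> 'I_n) (R : realType) (u v : U) : R :=
  (h u == h v)%:R.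

Definition Wf (R : realType) (U : finType) n (h : U -> 'I_n) m (u0 : U)
  (x : {ffun 'I_m -> U}) : R :=
  \sum_(r < m./2) gg h R (atn u0 x r.*2) (atn u0 x r.*2.+1).

Lemma Wf_cons2 (R : realType) (U : finType) n (h : U -> 'I_n) m (u0 u v : U)
  (y : {ffun 'I_m -> U}) :
  Wf R h u0 (fcons u (fcons v y)) = gg h R u v + Wf R h u0 y.
Proof.
rewrite /Wf /= big_ord_recl /= atn_cons0 atn_consS atn_cons0; congr (_ + _).
by apply: eq_bigr => r _; rewrite /= doubleS !atn_consS.
Qed.

Definition Epair (R : realType) (U : finType) (q : U -> R) n (h : U -> 'I_n) (mu : R) : R :=
  \sum_u \sum_v q u * q v * expR (mu * gg h R u v).

Lemma Ex_W (R : realType) (U : finType) (q : U -> R) n (h : U -> 'I_n) (u0 : U) mu :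
  \sum_u q u = 1 -> forall m,
  Ex q (fun x : {ffun 'I_m -> U} => expR (mu * Wf R h u0 x)) = Epair q h mu ^+ m./2.
Proof.
move=> q1.
suff H : forall m, Ex q (fun x : {ffun 'I_m -> U} => expR (mu * Wf R h u0 x)) = Epair q h mu ^+ m./2
  /\ Ex q (fun x : {ffun 'I_m.+1 -> U} => expR (mu * Wf R h u0 x)) = Epair q h mu ^+ m.+1./2.
  by move=> m; case: (H m).
elim=> [|m [IH IH1]].
  have W0 k (x : {ffun 'I_k -> U}) : (k <= 1)%N -> Wf R h u0 x = 0.
    by move=> hk; rewrite /Wf big1 // => -[r /= hr]; move: hr; case: k hk x => [|[]].
  by split; rewrite expr0; [rewrite -(@Ex1 _ _ q 0 q1) | rewrite -(@Ex1 _ _ q 1 q1)];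
    apply: eq_Ex => x; rewrite W0 // mulr0 expR0.
split=> //.
rewrite Ex_cons.
under eq_bigr => u _ do rewrite Ex_cons mulr_sumr.
rewrite /Epair /= exprS mulr_suml; apply: eq_bigr => u _; rewrite mulr_suml; apply: eq_bigr => v _.
rewrite (@eq_Ex _ _ q _ _ (fun y => expR (mu * gg h R u v) * expR (mu * Wf R h u0 y))); last first.
  by move=> y; rewrite Wf_cons2 mulrDr expRD.
by rewrite ExZ IH !mulrA.
Qed.

Lemma sum_gg (R : realType) (U : finType) (q : U -> R) n (h : U -> 'I_n) :
  \sum_u \sum_v q u * q v * gg h R u v = normp2 q h.
Proof.
transitivity (\sum_u q u * pslot q h (h u)).
  apply: eq_bigr => u _; rewrite /pslot mulr_sumr [RHS]big_mkcond /=.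
  apply: eq_bigr => v _; rewrite /gg eq_sym; case: eqP => _; by rewrite ?mulr1 ?mulr0.
rewrite /normp2 (partition_big h predT) //=.
apply: eq_bigr => i _; rewrite expr2 [in RHS]/pslot mulr_suml.
by apply: eq_bigr => u /eqP ->.
Qed.

Lemma Epair_eq (R : realType) (U : finType) (q : U -> R) n (h : U -> 'I_n) mu :
  \sum_u q u = 1 -> Epair q h mu = 1 + normp2 q h * (expR mu - 1).
Proof.
move=> q1.
have E u v : expR (mu * gg h R u v) = 1 + gg h R u v * (expR mu - 1).
  by rewrite /gg; case: (h u == h v); rewrite /= ?mulr1 ?mul1r ?mulr0 ?mul0r ?expR0 ?addr0 // addrC subrK.
rewrite /Epair -sum_gg mulr_suml.
transitivity (\sum_u \sum_v (q u * q v + q u * q v * gg h R u v * (expR mu - 1))).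
  by apply: eq_bigr => u _; apply: eq_bigr => v _; rewrite E mulrDr mulr1 mulrA.
under eq_bigr => u _ do rewrite big_split /=.
rewrite big_split /=; congr (_ + _).
  by rewrite -[RHS]q1; apply: eq_bigr => u _; rewrite -mulr_sumr q1 mulr1.
by apply: eq_bigr => u _; rewrite mulr_suml.
Qed.

Definition fperm (U : finType) m (x : {ffun 'I_m -> U}) (s : {perm 'I_m}) :
  {ffun 'I_m -> U} := [ffun j => x (s j)].

Lemma Ex_perm (R : realType) (U : finType) (q : U -> R) m (s : {perm 'I_m}) F :
  Ex q (fun x => F (fperm x s)) = Ex q F.
Proof.
rewrite /Ex (reindex (fun y : {ffun 'I_m -> U} => fperm y (s^-1)%g)) /=; last first.
  exists (fun x => fperm x s) => x _; apply/ffunP => j; rewrite !ffunE.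
    by rewrite permK.
  by rewrite permKV.
apply: eq_bigr => y _.
have -> : fperm (fperm y s^-1) s = y by apply/ffunP => j; rewrite !ffunE permK.
congr (_ * _); rewrite (reindex_inj (@perm_inj _ s)) /=.
by apply: eq_bigr => j _; rewrite ffunE permK.
Qed.

Lemma Ex_sum (R : realType) (U : finType) (q : U -> R) m (I : finType)
  (F : I -> {ffun 'I_m -> U} -> R) :
  Ex q (fun x => \sum_i F i x) = \sum_i Ex q (F i).
Proof.
rewrite /Ex exchange_big /=; apply: eq_bigr => x _; by rewrite mulr_sumr.
Qed.

Lemma ler_Ex (R : realType) (U : finType) (q : U -> R) m (F G : {ffun 'I_m -> U} -> R) :
  (forall u, 0 <= q u) -> (forall x, F x <= G x) -> Ex q F <= Ex q G.
Proof.
move=> q0 FG; rewrite /Ex; apply: ler_sum => x _; apply: ler_wpM2l => //.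
by apply: prodr_ge0 => j _.
Qed.

Lemma jensen_exp (R : realType) (I : finType) (y : I -> R) :
  (0 < #|I|)%N -> expR ((#|I|%:R)^-1 * \sum_i y i) <= (#|I|%:R)^-1 * \sum_i expR (y i).
Proof.
move=> I0; set N := #|I|%:R; set a := N^-1 * \sum_i y i.
have N0 : 0 < N by rewrite ltr0n.
have H i : expR a * (1 + (y i - a)) <= expR (y i).
  by rewrite -[X in _ <= expR X](subrKC a) expRD ler_wpM2l ?expR_ge0 ?expR_ge1Dx.
rewrite -(ler_pM2l N0) mulrA mulfV ?gt_eqF // mul1r.
apply: le_trans (ler_sum _ (fun i _ => H i)).
rewrite -mulr_sumr big_split /= sumrB !sumr_const -/N.
have -> : \sum_i y i = N * a by rewrite /a mulrA mulfV ?gt_eqF // mul1r.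
rewrite -mulr_natr; set K := (X in a * X); have -> : K = N by []; by rewrite [a * N]mulrC subrr addr0 mulrC.
Qed.

Definition Yf (R : realType) (U : finType) n (h : U -> 'I_n) m (x : {ffun 'I_m -> U}) : R :=
  \sum_(a : 'I_m) \sum_(b | b != a) gg h R (x a) (x b).

Definition Cf (R : realType) (U : finType) n (h : U -> 'I_n) m (x : {ffun 'I_m -> U})
  (a b : 'I_m) : R :=
  \sum_(s : {perm 'I_m}) gg h R (x (s a)) (x (s b)).

Lemma Cf_indep (R : realType) (U : finType) n (h : U -> 'I_n) m (x : {ffun 'I_m -> U})
  (a b a' b' : 'I_m) : a != b -> a' != b' -> Cf R h x a' b' = Cf R h x a b.
Proof.
move=> ab ab'.
set t1 := tperm a' a; set b2 := t1 b'; set t2 := tperm b2 b.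
have b2a : b2 != a by rewrite /b2 -[X in _ != X](tpermL a' a) (inj_eq perm_inj) eq_sym.
have ta : (t1 * t2)%g a' = a by rewrite permM tpermL tpermD // eq_sym.
have tb : (t1 * t2)%g b' = b by rewrite permM -/b2 tpermL.
rewrite /Cf (reindex_inj (mulgI (t1 * t2)%g)) /=.
by apply: eq_bigr => s _; rewrite !(permM (t1 * t2)%g) ta tb.
Qed.

Lemma sum_Cf (R : realType) (U : finType) n (h : U -> 'I_n) m (x : {ffun 'I_m -> U}) :
  \sum_(a : 'I_m) \sum_(b | b != a) Cf R h x a b = (m`!)%:R * Yf R h x.
Proof.
rewrite /Cf.
under eq_bigr => a _ do rewrite exchange_big /=.
rewrite exchange_big /=.
transitivity (\sum_(s : {perm 'I_m}) Yf R h x); last by rewrite sumr_const card_Sn mulr_natl.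
apply: eq_bigr => s _; rewrite /Yf [RHS](reindex_inj (@perm_inj _ s)) /=.
apply: eq_bigr => a _; rewrite [RHS](reindex_inj (@perm_inj _ s)) /=.
by apply: eq_big => // b; rewrite (inj_eq perm_inj).
Qed.

Lemma Cf_Y (R : realType) (U : finType) n (h : U -> 'I_n) m (x : {ffun 'I_m -> U})
  (a0 b0 : 'I_m) : a0 != b0 ->
  (m%:R * (m%:R - 1)) * Cf R h x a0 b0 = (m`!)%:R * Yf R h x.
Proof.
move=> ab; rewrite -sum_Cf.
transitivity (\sum_(a : 'I_m) \sum_(b | b != a) Cf R h x a0 b0); last first.
  by apply: eq_bigr => a _; apply: eq_bigr => b ba; rewrite (@Cf_indep R _ _ h _ x a0 b0 a b ab) // eq_sym.
under eq_bigr => a _ do rewrite sumr_const.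
have E : forall a : 'I_m, #|[pred b : 'I_m | b != a]| = m.-1.
  by move=> a; have := cardC1 a; rewrite card_ord => <-; apply: eq_card => b.
under eq_bigr => a _ do rewrite E.
rewrite sumr_const card_ord -mulrnA [LHS]mulrC -[RHS]mulr_natr; congr (_ * _).
clear E; case: m x a0 b0 ab => [x []//|m _ _ _ _]. by rewrite -natr1 addrK /= mulnC natrM natr1.
Qed.

From mathcomp Require Import zify.

Lemma atn_lt (U : finType) m (u0 : U) (x : {ffun 'I_m -> U}) i (hi : (i < m)%N) :
  atn u0 x i = x (Ordinal hi).
Proof. by rewrite -(atn_ord u0 x (Ordinal hi)). Qed.

Lemma sum_W (R : realType) (U : finType) n (h : U -> 'I_n) m (u0 : U)
  (x : {ffun 'I_m -> U}) (a0 b0 : 'I_m) : a0 != b0 ->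
  \sum_(s : {perm 'I_m}) Wf R h u0 (fperm x s) = (m./2)%:R * Cf R h x a0 b0.
Proof.
move=> ab; rewrite /Wf exchange_big /=.
transitivity (\sum_(r < m./2) Cf R h x a0 b0); last by rewrite sumr_const card_ord mulr_natl.
apply: eq_bigr => r _.
have hm := odd_double_half m; have hr := ltn_ord r.
have hr0 : (r.*2 < m)%N by rewrite -!addnn in hm *; lia.
have hr1 : (r.*2.+1 < m)%N by rewrite -!addnn in hm *; lia.
have hne : Ordinal hr0 != Ordinal hr1.
  by rewrite -val_eqE /= eqn_leq ltnn andbF.
rewrite -(@Cf_indep R _ _ h _ x a0 b0 (Ordinal hr0) (Ordinal hr1) ab hne).
by rewrite /Cf; apply: eq_bigr => s _; rewrite (atn_lt _ _ hr0) (atn_lt _ _ hr1) !ffunE.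
Qed.

Lemma kcount_Y (R : realType) (U : finType) n (h : U -> 'I_n) m (x : {ffun 'I_m -> U}) :
  \sum_(i < n) (kcount h x i)%:R * ((kcount h x i)%:R - 1) = Yf R h x.
Proof.
have kE i : (kcount h x i)%:R = \sum_j ((h (x j) == i)%:R : R).
  rewrite /kcount -sum1_card natr_sum [LHS]big_mkcond /=; apply: eq_bigr => j _.
  by rewrite inE; case: eqP.
have one a : \sum_(i < n) ((a == i)%:R : R) = 1.
  by rewrite (bigD1 a) //= eqxx big1 ?addr0 // => i; rewrite eq_sym => /negbTE->.
under eq_bigr => i _ do rewrite mulrBr mulr1.
rewrite sumrB.
have -> : \sum_(i < n) (kcount h x i)%:R = m%:R :> R.
  under eq_bigr => i _ do rewrite kE.
  by rewrite exchange_big /=; under eq_bigr => j _ do rewrite one; rewrite sumr_const card_ord.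
have -> : \sum_(i < n) (kcount h x i)%:R * (kcount h x i)%:R =
    \sum_(a : 'I_m) \sum_(b : 'I_m) gg h R (x a) (x b).
  under eq_bigr => i _ do rewrite kE mulr_suml.
  rewrite exchange_big /=; apply: eq_bigr => a _.
  under eq_bigr => i _ do rewrite mulr_sumr.
  rewrite exchange_big /=; apply: eq_bigr => b _.
  rewrite /gg; case: (eqVneq (h (x a)) (h (x b))) => [->|hab].
    by under eq_bigr => i _ do rewrite -natrM mulnb andbb; rewrite one.
  rewrite big1 // => i _; rewrite -natrM mulnb.
  by case: eqP => [<-|_] /=; rewrite /= ?andbF // eq_sym (negbTE hab).
have -> : (m%:R : R) = \sum_(a : 'I_m) 1 by rewrite sumr_const card_ord.
rewrite /Yf -sumrB; apply: eq_bigr => a _.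
by rewrite (bigD1 a) //= /gg eqxx addrC addrK.
Qed.

From mathcomp Require Import ring lra.

Lemma Epair_ge0 (R : realType) (U : finType) (q : U -> R) n (h : U -> 'I_n) mu :
  (forall u, 0 <= q u) -> 0 <= Epair q h mu.
Proof.
move=> q0; apply: sumr_ge0 => u _; apply: sumr_ge0 => v _.
by rewrite !mulr_ge0 ?expR_ge0.
Qed.

Lemma mgf (R : realType) (U : finType) (q : U -> R) n (h : U -> 'I_n) m (u0 : U)
  (q0 : forall u, 0 <= q u) (q1 : \sum_u q u = 1) (hm2 : (2 <= m)%N) th :
  Ex q (fun x : {ffun 'I_m -> U} => expR (th * (Yf R h x / (m%:R * (m%:R - 1)))))
  <= expR ((m./2)%:R * (normp2 q h * (expR (th / (m./2)%:R) - 1))).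
Proof.
have hk : (0 < m./2)%N by rewrite half_gt0.
set k := m./2 in hk *.
have k0 : (k%:R : R) != 0 by rewrite pnatr_eq0 -lt0n.
set N := #|{perm 'I_m}|.
have N0 : (0 < N)%N by rewrite /N card_Sn fact_gt0.
have NR : (N%:R : R) != 0 by rewrite pnatr_eq0 -lt0n.
have hm0 : (0 < m)%N by apply: leq_trans hm2.
have hm1 : (1 < m)%N by [].
set a0 : 'I_m := Ordinal hm0; set b0 : 'I_m := Ordinal hm1.
have ab : a0 != b0 by [].
have mm : (m%:R * (m%:R - 1) : R) != 0.
  rewrite mulf_eq0 negb_or pnatr_eq0 -lt0n hm0 /= subr_eq0.
  by rewrite pnatr_eq1; case: m hm2 {a0 b0 ab hk k k0 N N0 NR hm0 hm1} => [|[]].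
apply: (@le_trans _ _ (Ex q (fun x => expR (th / k%:R * Wf R h u0 x)))); last first.
  rewrite Ex_W // expRM_natl; apply: lerXn2r; rewrite ?nnegrE ?Epair_ge0 ?expR_ge0 //.
  by rewrite Epair_eq // expR_ge1Dx.
apply: (@le_trans _ _ (Ex q (fun x => (N%:R)^-1 * \sum_(s : {perm 'I_m})
    expR (th / k%:R * Wf R h u0 (fperm x s))))).
  apply: ler_Ex => // x.
  have -> : th * (Yf R h x / (m%:R * (m%:R - 1))) =
      (N%:R)^-1 * \sum_(s : {perm 'I_m}) (th / k%:R * Wf R h u0 (fperm x s)).
    have NR' : (m`!%:R : R) != 0 by rewrite -card_Sn -/N NR.
    have HY : Yf R h x = (m%:R * (m%:R - 1)) * Cf R h x a0 b0 / m`!%:R.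
      by rewrite (@Cf_Y R _ _ h _ x a0 b0 ab) mulrC mulrA mulVf // mul1r.
    rewrite -mulr_sumr (@sum_W R _ _ h _ u0 x a0 b0 ab) HY /N card_Sn.
    field; move: mm; rewrite mulf_eq0 negb_or => /andP[-> ->]; by rewrite k0 NR'.
  exact: jensen_exp.
rewrite ExZ Ex_sum.
under eq_bigr => s _ do rewrite (@Ex_perm _ _ q m s (fun y => expR (th / k%:R * Wf R h u0 y))).
rewrite sumr_const; set E := Ex q _; set K := (X in _ *+ X); have -> : K = N by [].
by rewrite -[E *+ N]mulr_natr [E * _]mulrC mulrA mulVf // mul1r.
Qed.

Lemma expR_le2 (R : realType) (mu : R) : mu <= 1 / 2 ->
  expR mu <= 1 + mu + 2 * mu ^+ 2.
Proof.
move=> hmu.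
have h1 := expR_ge1Dx (- mu).
have h2 := expRxMexpNx_1 mu.
have h3 := expR_gt0 mu.
nra.
Qed.

Lemma probm_le (R : realType) (U : finType) (q : U -> R) m (A : pred {ffun 'I_m -> U})
  (G : {ffun 'I_m -> U} -> R) : (forall u, 0 <= q u) ->
  (forall x, A x -> 1 <= G x) -> (forall x, 0 <= G x) -> probm q A <= Ex q G.
Proof.
move=> q0 hA hG; rewrite /probm /Ex [X in X <= _]big_mkcond /=; apply: ler_sum => x _.
have w0 : 0 <= \prod_(j < m) q (x j) by apply: prodr_ge0.
case: ifP => Ax; last by rewrite mulr_ge0.
by rewrite -[X in X <= _]mulr1 ler_wpM2l // hA.
Qed.

Lemma probmC (R : realType) (U : finType) (q : U -> R) m (A : pred {ffun 'I_m -> U}) :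
  \sum_u q u = 1 -> probm q A = 1 - probm q (predC A).
Proof.
move=> q1; have := @Ex1 _ _ q m q1; rewrite /Ex (bigID A) /= => <-.
rewrite /probm.
have E (P : pred {ffun 'I_m -> U}) : \sum_(i | P i) (\prod_(j < m) q (i j)) * 1 = \sum_(i | P i) \prod_(j < m) q (i j).
  by apply: eq_bigr => i _; rewrite mulr1.
by rewrite !E addrK.
Qed.

Lemma p2_ge (R : realType) (U : finType) (q : U -> R) n (h : U -> 'I_n) :
  \sum_u q u = 1 -> (0 < n)%N -> 1 / n%:R <= normp2 q h.
Proof.
move=> q1 n0.
have S : \sum_(i < n) pslot q h i = 1.
  by rewrite -q1 (partition_big h predT) //=.
have nR : (0 : R) < n%:R by rewrite ltr0n.
have H : 0 <= \sum_(i < n) (pslot q h i - 1 / n%:R) ^+ 2 by apply: sumr_ge0 => i _; apply: sqr_ge0.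
rewrite (eq_bigr (fun i => pslot q h i ^+ 2 - (2 / n%:R) * pslot q h i + (1 / n%:R) ^+ 2)) in H; last first.
  by move=> i _; rewrite sqrrB; ring.
rewrite big_split /= sumrB -mulr_sumr S sumr_const card_ord in H.
rewrite -/(normp2 q h) in H.
suff E : normp2 q h - 2 / n%:R * 1 + (1 / n%:R) ^+ 2 *+ n = normp2 q h - 1 / n%:R.
  by rewrite E subr_ge0 in H.
by rewrite -[_ *+ n]mulr_natr; field; rewrite gt_eqF.
Qed.

Lemma ExD (R : realType) (U : finType) (q : U -> R) m (F G : {ffun 'I_m -> U} -> R) :
  Ex q (fun x => F x + G x) = Ex q F + Ex q G.
Proof. by rewrite /Ex -big_split; apply: eq_bigr => x _; rewrite mulrDr. Qed.

Lemma Yf_ge0 (R : realType) (U : finType) n (h : U -> 'I_n) m (x : {ffun 'I_m -> U}) :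
  0 <= Yf R h x.
Proof. by apply: sumr_ge0 => a _; apply: sumr_ge0 => b _; rewrite /gg ler0n. Qed.


Lemma arithL1 (R : realType) (s t k p2 m ninv : R) :
  1 / 2 < s -> 0 < t -> t <= 2 -> 0 <= k -> 0 < p2 -> ninv <= p2 -> 0 <= ninv ->
  ninv <= 1 / 25 -> m - 1 <= 2 * k -> (3 + 6 * s) ^+ 2 <= m * (t ^+ 2 * ninv) ->
  k * p2 * (2 * (t / 4) ^+ 2 - t / 4 * t) <= - s ^+ 2 / 4 - 1.
Proof.
move=> hs t0 t2 k0 p0 np n0 n25 km X.
have t2' : 0 <= t ^+ 2 by apply: sqr_ge0.
have f1 : k * t ^+ 2 * ninv <= k * t ^+ 2 * p2 by apply: ler_wpM2l => //; apply: mulr_ge0.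
have tn : 0 <= t ^+ 2 * ninv by apply: mulr_ge0.
have f2 : (m - 1) * (t ^+ 2 * ninv) <= 2 * k * (t ^+ 2 * ninv) by apply: ler_wpM2r.
have t4 : t ^+ 2 <= 4 by nra.
have f3 : t ^+ 2 * ninv <= 4 / 25 by nra.
have -> : k * p2 * (2 * (t / 4) ^+ 2 - t / 4 * t) = - (k * t ^+ 2 * p2) / 8 by field.
have s2 : s / 2 <= s ^+ 2 by nra.
nra.
Qed.

Lemma arithL2 (R : realType) (s t k p2 m ninv : R) :
  2 < t -> 0 <= k -> 0 < p2 -> ninv <= p2 -> 0 <= ninv ->
  m - 1 <= 2 * k -> 2 <= m -> 9 + 5 * s ^+ 2 <= m * (t * ninv) ->
  k * p2 * (2 * (1 / 2) ^+ 2 - 1 / 2 * t) <= - s ^+ 2 / 4.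
Proof.
move=> t2 k0 p0 np n0 km m2 X.
have g1 : k * t * ninv <= k * t * p2 by apply: ler_wpM2l => //; apply: mulr_ge0 => //; lra.
have tn : 0 <= t * ninv by apply: mulr_ge0 => //; lra.
have g2 : (m - 1) * (t * ninv) <= 2 * k * (t * ninv) by apply: ler_wpM2r.
have g3 : m * (t * ninv) <= 2 * ((m - 1) * (t * ninv)) by nra.
have kp : 0 <= k * p2 by apply: mulr_ge0 => //; lra.
have g4 : k * p2 <= k * p2 * t / 2 by nra.
nra.
Qed.

Lemma arithL3 (R : realType) (s E : R) : E <= - s ^+ 2 / 4 - 1 ->
  expR E + expR E <= 10 / 9 * expR (- s ^+ 2 / 4).
Proof.
move=> hE.
have em1 : expR (-1) <= 1 / 2 :> R.
  have := expRxMexpNx_1 (1 : R); have := expR_ge1Dx (1 : R); have := expR_gt0 (-1 : R); nra.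
have : expR E <= expR (- s ^+ 2 / 4) * expR (-1) by rewrite -expRD ler_expR; lra.
have := expR_gt0 (- s ^+ 2 / 4); nra.
Qed.

Lemma arithL4 (R : realType) (s E : R) : E <= - s ^+ 2 / 4 ->
  expR E <= 10 / 9 * expR (- s ^+ 2 / 4).
Proof.
rewrite -ler_expR => hE; have := expR_gt0 (- s ^+ 2 / 4); lra.
Qed.

Lemma arithL5 (R : realType) (s : R) : 0 < s -> s <= 1 / 2 -> 1 <= 10 / 9 * expR (- s ^+ 2 / 4).
Proof. move=> s0 s2; have := expR_ge1Dx (- s ^+ 2 / 4); nra. Qed.

Unset Implicit Arguments.

Theorem theorem2 (R : realType) (U : finType) (q : U -> R) (n : nat) (h : U -> 'I_n)
  (eps delta s : R) (m : nat)
  (q_ge0 : forall u, 0 <= q u) (q_sum1 : \sum_u q u = 1)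
  (hn : (24 < n)%N) (heps0 : 0 < eps) (heps1 : eps < 1 / 3)
  (hdelta : 0 < delta) (hs : 0 < s)
  (hm : m%:R = eps ^-2 * (n%:R `^ (1 + delta))) :
  probm q (fun x : {ffun 'I_m -> U} =>
    `| (\sum_(i < n) ((kcount h x i)%:R * ((kcount h x i)%:R - 1))
            / (m%:R * (m%:R - 1))) / normp2 q h - 1 |
      <= eps * (3 + 6 * s / (n%:R `^ (delta / 2)) + 5 * s ^+ 2 * eps / (n%:R `^ delta)))
  >= 1 - 10 / 9 * expR (- s ^+ 2 / 4).
Proof.
have [u0 _] : exists u0 : U, true.
  case: (pickP (fun _ : U => true)) => [u _|hU]; first by exists u.
  by move: q_sum1; rewrite big1 // => [/esym/eqP|u]; rewrite ?oner_eq0 // hU.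
have n0 : (0 < n)%N by apply: leq_trans hn.
have nR : (25 : R) <= n%:R by rewrite (ler_nat R 25 n).
set p2 := normp2 q h.
have p2ge : 1 / n%:R <= p2 := p2_ge h q_sum1 n0.
have p2gt : 0 < p2 by apply: lt_le_trans p2ge; rewrite divr_gt0 // ltr0n.
set P := n%:R `^ (delta / 2).
have P1 : 1 <= P.
  have n1 : (1 : R) <= n%:R by apply: le_trans nR; rewrite ler1n.
  have := @ler_powR R n%:R n1 0 (delta / 2); rewrite powRr0; apply.
  by rewrite divr_ge0 // ltW.
have Pd : n%:R `^ delta = P ^+ 2.
  by rewrite /P -powR_mulrn ?powR_ge0 // -powRrM; congr (_ `^ _); field.
have Pn : n%:R `^ (1 + delta) = n%:R * P ^+ 2.
  rewrite powRD ?pnatr_eq0 -?lt0n ?n0 ?implybT // powRr1 ?ler0n //.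
  by rewrite Pd.
rewrite Pd.
have hmR : m%:R * eps ^+ 2 = n%:R * P ^+ 2.
  by rewrite hm Pn; field; rewrite gt_eqF.
have eps2 : eps ^+ 2 <= 1 / 9 by nra.
have P2 : 1 <= P ^+ 2 by nra.
have mR9 : 9 * n%:R <= m%:R :> R.
  have n0' : 0 < n%:R :> R by rewrite ltr0n.
  have m0 : 0 <= m%:R :> R by rewrite ler0n.
  have a1 : 9 * (m%:R * eps ^+ 2) <= m%:R by nra.
  have a2 : n%:R <= n%:R * P ^+ 2 by nra.
  rewrite hmR in a1; lra.
have hm2 : (2 <= m)%N by rewrite -(ler_nat R); lra.
set k := m./2.
have kge : m%:R - 1 <= 2 * k%:R :> R.
  have : (m <= k.*2 + 1)%N.
    by rewrite -{1}(odd_double_half m) -/k addnC leq_add2l; case: (odd m).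
  rewrite -(ler_nat R) natrD -muln2 natrM => H; lra.
set Z := fun x : {ffun 'I_m -> U} => Yf R h x / (m%:R * (m%:R - 1)).
have mm1 : 0 < m%:R * (m%:R - 1) :> R by apply: mulr_gt0; [rewrite ltr0n; exact: (leq_trans _ hm2) | lra].
have Zge0 x : 0 <= Z x by rewrite /Z divr_ge0 ?Yf_ge0 // ltW.
have hZ x : \sum_(i < n) ((kcount h x i)%:R * ((kcount h x i)%:R - 1)) / (m%:R * (m%:R - 1)) = Z x.
  by rewrite -mulr_suml kcount_Y.
have mE : m%:R = n%:R * P ^+ 2 / eps ^+ 2.
  by rewrite -hmR mulrK // unitfE expf_neq0 // gt_eqF.
set t := eps * (3 + 6 * s / P + 5 * s ^+ 2 * eps / P ^+ 2).
have P0 : 0 < P by lra.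
have X1 : (3 + 6 * s) ^+ 2 <= m%:R * t ^+ 2 / n%:R.
  have -> : m%:R * t ^+ 2 / n%:R = (3 * P + 6 * s + 5 * s ^+ 2 * eps / P) ^+ 2.
    rewrite mE /t; field.
    by rewrite !gt_eqF // ltr0n.
  have sP : 0 <= 5 * s ^+ 2 * eps / P by rewrite !mulr_ge0 ?invr_ge0 // ltW.
  nra.
have X2 : 9 + 5 * s ^+ 2 <= m%:R * t / n%:R.
  have -> : m%:R * t / n%:R = 3 * P ^+ 2 / eps + 6 * s * P / eps + 5 * s ^+ 2.
    rewrite mE /t; field.
    by rewrite !gt_eqF // ltr0n.
  have a1 : 9 <= 3 * P ^+ 2 / eps.
    rewrite ler_pdivlMr //; nra.
  have a2 : 0 <= 6 * s * P / eps by rewrite !mulr_ge0 ?invr_ge0 // ltW.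
  lra.
have t0 : 0 < t.
  rewrite /t mulr_gt0 //; have : 0 <= 6 * s / P by rewrite !mulr_ge0 ?invr_ge0 // ltW.
  have : 0 <= 5 * s ^+ 2 * eps / P ^+ 2 by apply: divr_ge0; nra.
  lra.
have k0 : 0 < k%:R :> R by rewrite ltr0n half_gt0.
have kp : 0 <= k%:R * p2 by rewrite mulr_ge0 // ltW.
have mgfZ th : Ex q (fun x => expR (th * Z x)) <= expR (k%:R * (p2 * (expR (th / k%:R) - 1))).
  exact: (mgf h u0 q_ge0 q_sum1 hm2 th).
have up mu : 0 <= mu -> mu <= 1 / 2 ->
    Ex q (fun x => expR (k%:R * mu * (Z x - p2 * (1 + t)))) <= expR (k%:R * p2 * (2 * mu ^+ 2 - mu * t)).
  move=> mu0 mu1.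
  rewrite (@eq_Ex _ _ q _ _ (fun x => expR (- (k%:R * mu * (p2 * (1 + t)))) * expR ((k%:R * mu) * Z x))); last first.
    by move=> x; rewrite -expRD; congr expR; ring.
  rewrite ExZ; apply: le_trans (ler_wpM2l (expR_ge0 _) (mgfZ _)) _.
  rewrite -expRD ler_expR.
  have -> : k%:R * mu / k%:R = mu by field; rewrite gt_eqF.
  have hh : 0 <= k%:R * p2 * (1 + mu + 2 * mu ^+ 2 - expR mu).
    by rewrite mulr_ge0 // subr_ge0 expR_le2.
  lra.
have down mu : 0 <= mu -> mu <= 1 / 2 ->
    Ex q (fun x => expR (k%:R * mu * (p2 * (1 - t) - Z x))) <= expR (k%:R * p2 * (2 * mu ^+ 2 - mu * t)).
  move=> mu0 mu1.
  rewrite (@eq_Ex _ _ q _ _ (fun x => expR (k%:R * mu * (p2 * (1 - t))) * expR ((- (k%:R * mu)) * Z x))); last first.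
    by move=> x; rewrite -expRD; congr expR; ring.
  rewrite ExZ; apply: le_trans (ler_wpM2l (expR_ge0 _) (mgfZ _)) _.
  rewrite -expRD ler_expR.
  have -> : - (k%:R * mu) / k%:R = - mu by field; rewrite gt_eqF.
  have : - mu <= 1 / 2 by lra.
  move/expR_le2 => hmu.
  have hh : 0 <= k%:R * p2 * (1 + - mu + 2 * (- mu) ^+ 2 - expR (- mu)).
    by rewrite mulr_ge0 // subr_ge0.
  rewrite sqrrN in hh. lra.
set A := (X in probm q X).
rewrite (@probmC _ _ q m A q_sum1) lerD2l lerN2.
have notA x : predC A x -> t < `|Z x / p2 - 1|.
  by rewrite /= /A hZ -ltNge.
have eS0 : 0 < expR (- s ^+ 2 / 4) := expR_gt0 _.
have geG y : 0 <= y -> 1 <= expR y.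
  by move=> y0; apply: le_trans (expR_ge1Dx y); lra.
have p2t0 : 0 <= k%:R * p2 * t by rewrite mulr_ge0 // ltW.
have n0R : 0 < n%:R :> R by rewrite ltr0n.
have invn : 1 / n%:R <= 1 / 25 :> R by rewrite ler_pdivrMr // mulrC mulrA ler_pdivlMr //; lra.
have invn0 : 0 <= 1 / n%:R :> R by rewrite divr_ge0 // ltW.
case: (lerP s (1 / 2)) => hs2.
  apply: (@le_trans _ _ (Ex q (fun _ => 1))).
    by apply: probm_le => // x _; rewrite ler01.
  by rewrite Ex1 //; apply: arithL5.
case: (lerP t 2) => ht2.
  set mu := t / 4.
  have mu0 : 0 <= mu by rewrite /mu divr_ge0 // ltW.
  have mu1 : mu <= 1 / 2 by rewrite /mu; lra.
  apply: (@le_trans _ _ (Ex q (fun x => expR (k%:R * mu * (Z x - p2 * (1 + t))) +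
                                      expR (k%:R * mu * (p2 * (1 - t) - Z x))))).
    apply: probm_le => // [x /notA|x]; last by rewrite addr_ge0 ?expR_ge0.
    rewrite ltr_normr => /orP[] H.
      have : p2 * (1 + t) <= Z x.
        by apply: ltW; rewrite mulrC -ltr_pdivlMr //; lra.
      move=> H1; set b := expR _; set a := expR _.
      have : 0 <= a by exact: expR_ge0.
      suff : 1 <= b by lra.
      apply: geG; by rewrite mulr_ge0 ?subr_ge0 // mulr_ge0 // ltW.
    have : Z x <= p2 * (1 - t).
      by apply: ltW; rewrite mulrC -ltr_pdivrMr //; lra.
    move=> H1; set b := expR _; set a := expR _.
    have : 0 <= b by exact: expR_ge0.
    suff : 1 <= a by lra.
    apply: geG; by rewrite mulr_ge0 ?subr_ge0 // mulr_ge0 // ltW.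
  rewrite ExD; apply: le_trans (lerD (up _ mu0 mu1) (down _ mu0 mu1)) _.
  apply: arithL3; apply: (arithL1 (m := m%:R) (ninv := 1 / n%:R)) => //.
  by rewrite mulrA mul1r; exact: X1.
apply: (@le_trans _ _ (Ex q (fun x => expR (k%:R * (1 / 2) * (Z x - p2 * (1 + t)))))).
  apply: probm_le => // [x /notA|x]; last exact: expR_ge0.
  rewrite ltr_normr => /orP[] H; last first.
    have := Zge0 x; have : 0 <= Z x / p2 by rewrite divr_ge0 // ltW.
    lra.
  have : p2 * (1 + t) <= Z x.
    by apply: ltW; rewrite mulrC -ltr_pdivlMr //; lra.
  move=> H1; apply: geG.
  by apply: mulr_ge0; [rewrite mulr_ge0 // divr_ge0 | rewrite subr_ge0].
have h12 : (0 : R) <= 1 / 2 by rewrite divr_ge0.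
have h12' : (1 : R) / 2 <= 1 / 2 by exact: lexx.
apply: le_trans (up _ h12 h12') _.
apply: arithL4; apply: (arithL2 (m := m%:R) (ninv := 1 / n%:R)) => //.
  by rewrite (ler_nat R 2 m).
by rewrite mulrA mul1r; exact: X2.
Qed.
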